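(* Let $d\ge1$, $m\in\mathbb{N}$ ($m\ge1$), and let $A_0,A_1\in\mathbb{R}^{d\times d}$ be constant matrices. Let $\Psi:\mathbb{Z}_{-m}^{0}\to\mathbb{R}^{d\times d}$ satisfy $A_1\Psi(u)=\Psi(u)A_1$ for all $u\in\mathbb{Z}_{-m}^{0}$, and let $Z$ be the discrete function defined in the context. Then \[ X(u)=Z(u)\Psi(-m)+\sum_{r=-m+1}^{0}Z(u-m-r)\,\Delta\Psi(r-1),\qquad u\in\mathbb{Z}_{-m}^{\infty}, \] is the unique solution of \[ \Delta X(u)=A_0X(u-m)+X(u-m)A_1,\ \ u\in\mathbb{Z}_0^{\infty},\qquad X(u)=\Psi(u),\ \ u\in\mathbb{Z}_{-m}^{0}. \]
   Context: $\Theta$ and $I$ denote the $d\times d$ zero and identity matrices; $\mathbb{Z}_a^b=\{a,a+1,\dots,b\}$ (with $\mathbb{Z}_a^\infty=\{a,a+1,\dots\}$ and $\mathbb{Z}_{-\infty}^b=\{\dots,b-1,b\}$); $\Delta X(u)=X(u+1)-X(u)$ (so $\Delta\Psi(r-1)=\Psi(r)-\Psi(r-1)$). For integers $a$ and $r\ge0$, $\binom{a}{r}=a(a-1)\cdots(a-r+1)/r!$. Define matrices $Q_{r+1}(rm)$, $r=0,1,2,\dots$, by $Q_1(0)=I$ and $Q_{r+1}(rm)=A_0Q_r((r-1)m)+Q_r((r-1)m)A_1$ for $r\ge1$. Define $Z(u)=\Theta$ for $u\in\mathbb{Z}_{-\infty}^{-m-1}$, $Z(u)=I$ for $u\in\mathbb{Z}_{-m}^{0}$,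 and for each integer $n\ge1$ and $u\in\mathbb{Z}_{(n-1)(m+1)+1}^{n(m+1)}$, \[ Z(u)=\sum_{r=0}^{n}\binom{u-(r-1)m}{r}Q_{r+1}(rm). \] *)

(* Defs.v *)
From mathcomp Require Import all_boot all_order all_algebra.
From mathcomp Require Import reals.
Set Implicit Arguments. Unset Strict Implicit. Unset Printing Implicit Defensive.
Import Order.TTheory GRing.Theory Num.Theory.
Local Open Scope ring_scope.

Definition binomZ (R : realType) (a : int) (r : nat) : R :=
  (\prod_(i < r) (a - (i : nat)%:Z)%:~R) / (r`!)%:R.

(* Qm A0 A1 r  =  Q_{r+1}(r m) of the paper:
   Q_1(0) = I,  Q_{r+1}(rm) = A0 Q_r((r-1)m) + Q_r((r-1)m) A1. *)
Fixpoint Qm (R : realType) (d : nat) (A0 A1 : 'M[R]_d) (r : nat) : 'M[R]_d :=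
  match r with
  | 0 => 1%:M
  | r'.+1 => A0 *m Qm A0 A1 r' + Qm A0 A1 r' *m A1
  end.

(* The discrete function Z of the paper.  For u >= 1, n is the unique n >= 1
   with (n-1)(m+1)+1 <= u <= n(m+1), i.e. n = (u-1) div (m+1) + 1. *)
Definition Zfun (R : realType) (d m : nat) (A0 A1 : 'M[R]_d) (u : int) : 'M[R]_d :=
  if u < - (m%:Z) then 0
  else if u <= 0 then 1%:M
  else let n := (`|((u - 1) %/ (m.+1)%:Z)%Z|%N).+1 in
       \sum_(r < n.+1)
         binomZ R (u - ((r : nat)%:Z - 1) * m%:Z) r *: Qm A0 A1 r.

Definition Xsol (R : realType) (d m : nat) (A0 A1 : 'M[R]_d)
  (Psi : int -> 'M[R]_d) (u : int) : 'M[R]_d :=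
  Zfun m A0 A1 u *m Psi (- (m%:Z))
  + \sum_(k < m)
      let r := (k : nat)%:Z - m%:Z + 1 in
      Zfun m A0 A1 (u - m%:Z - r) *m (Psi r - Psi (r - 1)).

Definition solves_ivp (R : realType) (d m : nat) (A0 A1 : 'M[R]_d)
  (Psi X : int -> 'M[R]_d) : Prop :=
  (forall u : int, 0 <= u ->
     X (u + 1) - X u = A0 *m X (u - m%:Z) + X (u - m%:Z) *m A1) /\
  (forall u : int, - (m%:Z) <= u <= 0 -> X u = Psi u).

(* Main.v *)
Require Import Defs.
From mathcomp Require Import all_boot all_order all_algebra.
From mathcomp Require Import reals.
From mathcomp Require Import zify ring lra.
Import Order.TTheory GRing.Theory Num.Theory.
Local Open Scope ring_scope.

Section S.
Variable R : realType.

Lemma binomZ0 (a : int) : binomZ R a 0 = 1.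
Proof. by rewrite /binomZ big_ord0 fact0 divr1. Qed.

Lemma binomZ_van (a : int) (r : nat) : 0 <= a -> a < r%:Z -> binomZ R a r = 0.
Proof.
move=> h0 h1.
have hr : (`|a| < r)%N by lia.
rewrite /binomZ (bigD1 (Ordinal hr)) //= .
have -> : a - (`|a|%N)%:Z = 0 by lia.
by rewrite mul0r mul0r.
Qed.

Lemma binomZ_pascal (a : int) (r : nat) :
  binomZ R (a + 1) r.+1 - binomZ R a r.+1 = binomZ R a r.
Proof.
rewrite /binomZ big_ord_recl big_ord_recr /=.
under eq_bigr => i _ do have -> : a + 1 - (bump 0 i : nat)%:Z = a - (i : nat)%:Z by rewrite /bump /=; lia.
set P := \prod_(i < r) _.
rewrite factS natrM.
have hf : (r`!)%:R != 0 :> R by rewrite pnatr_eq0 -lt0n fact_gt0.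
have hr : (r.+1)%:R != 0 :> R by rewrite pnatr_eq0.
rewrite /= subr0 !intrD intrN.
have -> : (r%:Z)%:~R = r%:R :> R by [].
have -> : (1%:Z)%:~R = 1 :> R by [].
rewrite -natr1 in hr *.
field.
by rewrite hf hr.
Qed.

Definition cb (a : int) (r : nat) : R := if 0 <= a then binomZ R a r else 0.

Lemma cb_pascal a r : cb (a + 1) r.+1 - cb a r.+1 = cb a r.
Proof.
rewrite /cb; have [ha|ha] := boolP (0 <= a).
  by rewrite ifT ?binomZ_pascal //; lia.
have [->|hne] := eqVneq a (-1).
  by rewrite /= binomZ_van //= subr0.
by rewrite ifF ?subr0 //; lia.
Qed.

Lemma cb_van a r : a < r%:Z -> cb a r = 0.
Proof. by rewrite /cb; case: ifP => // h1 h2; rewrite binomZ_van. Qed.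

Lemma cb0 a : 0 <= a -> cb a 0 = 1.
Proof. by move=> h; rewrite /cb h binomZ0. Qed.

Lemma trunc_sum (V : zmodType) (N1 N2 : nat) (F : nat -> V) :
  (N1 <= N2)%N -> (forall i, (N1 <= i)%N -> F i = 0) ->
  \sum_(i < N2) F i = \sum_(i < N1) F i.
Proof.
move=> hle hF; rewrite (big_ord_widen _ _ hle) [RHS]big_mkcond.
apply: eq_bigr => i _; case: ifP => // /negbT; rewrite -leqNgt => h.
by rewrite hF.
Qed.

Variables (d m : nat) (A0 A1 : 'M[R]_d).

Definition ZS (N : nat) (u : int) : 'M[R]_d :=
  \sum_(r < N) cb (u + m%:Z - (r : nat)%:Z * m%:Z) r *: Qm A0 A1 r.

Lemma ZS_rec M u : - (m%:Z) <= u ->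
  ZS M.+1 (u + 1) - ZS M.+1 u = A0 *m ZS M (u - m%:Z) + ZS M (u - m%:Z) *m A1.
Proof.
move=> hu.
rewrite /ZS -sumrB big_ord_recl /= mulmx_sumr mulmx_suml -big_split /=.
rewrite !mul0r !subr0 !cb0; try lia.
rewrite subrr add0r; apply: eq_bigr => i _.
rewrite -scalerBl.
have -> : u + 1 + m%:Z - (bump 0 i)%:Z * m%:Z = (u + m%:Z - (bump 0 i)%:Z * m%:Z) + 1.
  by rewrite /bump /=; lia.
rewrite cb_pascal.
have -> : u - m%:Z + m%:Z - (i : nat)%:Z * m%:Z = u + m%:Z - (bump 0 i)%:Z * m%:Z.
  by rewrite /bump /=; lia.
by rewrite -scalemxAr -scalemxAl -scalerDr.
Qed.

Lemma Z_eq u N : u + m%:Z < N%:Z -> Zfun m A0 A1 u = ZS N u.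
Proof.
move=> hN; rewrite /Zfun.
case: ifP => h1.
  by rewrite /ZS big1 // => r _; rewrite cb_van ?scale0r //; nia.
case: ifP => h2.
  case: N hN => [|N] hN; first by lia.
  rewrite /ZS big_ord_recl /= mul0r subr0 cb0; last by lia.
  rewrite scale1r big1 ?addr0 // => i _; rewrite cb_van ?scale0r //.
  rewrite /bump /=; nia.
set q := ((u - 1) %/ (m.+1)%:Z)%Z.
have hq0 : 0 <= q by rewrite divz_ge0 //; lia.
have hq1 : q * (m.+1)%:Z <= u - 1 by apply: lez_floor.
have hq2 : u - 1 < (q + 1) * (m.+1)%:Z by apply: ltz_ceil.
have habs : (`|q|%N)%:Z = q by rewrite gez0_abs.
rewrite /ZS (@trunc_sum _ (`|q|%N).+2 N (fun r : nat => cb (u + m%:Z - r%:Z * m%:Z) r *: Qm A0 A1 r)).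
- apply: eq_bigr => i _.
  rewrite /cb ifT; last by have := ltn_ord i; nia.
  congr (binomZ _ _ _ *: _); lia.
- nia.
- move=> i hi; rewrite cb_van ?scale0r //; nia.
Qed.


Lemma Z_rec u : - (m%:Z) <= u ->
  Zfun m A0 A1 (u + 1) - Zfun m A0 A1 u =
  A0 *m Zfun m A0 A1 (u - m%:Z) + Zfun m A0 A1 (u - m%:Z) *m A1.
Proof.
move=> hu.
pose M := (`|u|%N + m + 2)%N.
rewrite (@Z_eq (u + 1) M.+1) ?(@Z_eq u M.+1) ?(@Z_eq (u - m%:Z) M) ?ZS_rec //;
  rewrite /M; lia.
Qed.

Variable Psi : int -> 'M[R]_d.
Hypothesis hcomm : forall u : int, - (m%:Z) <= u <= 0 -> A1 *m Psi u = Psi u *m A1.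

Lemma aux (Z0 Z1 Z2 P : 'M[R]_d) :
  Z1 - Z0 = A0 *m Z2 + Z2 *m A1 -> A1 *m P = P *m A1 ->
  Z1 *m P - Z0 *m P = A0 *m (Z2 *m P) + (Z2 *m P) *m A1.
Proof.
move=> h hP; rewrite -mulmxBl h mulmxDl !mulmxA -!mulmxA hP.
by rewrite !mulmxA.
Qed.

Lemma Xsol_rec u : 0 <= u ->
  Xsol m A0 A1 Psi (u + 1) - Xsol m A0 A1 Psi u =
  A0 *m Xsol m A0 A1 Psi (u - m%:Z) + Xsol m A0 A1 Psi (u - m%:Z) *m A1.
Proof.
move=> hu; rewrite /Xsol.
rewrite opprD [LHS]addrACA mulmxDr mulmxDl [RHS]addrACA.
congr (_ + _).
  apply: aux; first by apply: Z_rec; lia.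
  by apply: hcomm; lia.
rewrite -sumrB mulmx_sumr mulmx_suml -big_split /=.
apply: eq_bigr => k _.
have hk := ltn_ord k.
apply: aux.
  have -> : u + 1 - m%:Z - ((k : nat)%:Z - m%:Z + 1) =
            (u - m%:Z - ((k : nat)%:Z - m%:Z + 1)) + 1 by lia.
  have -> : u - m%:Z - m%:Z - ((k : nat)%:Z - m%:Z + 1) =
            (u - m%:Z - ((k : nat)%:Z - m%:Z + 1)) - m%:Z by lia.
  by apply: Z_rec; lia.
rewrite mulmxBl mulmxBr !hcomm //; lia.
Qed.

Lemma Xsol_init u : - (m%:Z) <= u <= 0 -> Xsol m A0 A1 Psi u = Psi u.
Proof.
move=> /andP[h1 h2]; rewrite /Xsol.
have -> : Zfun m A0 A1 u = 1%:M by rewrite /Zfun ifF ?ifT //; lia.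
rewrite mul1mx.
pose j := absz (u + m%:Z).
have hj : (j <= m)%N by rewrite /j; lia.
pose f := fun i : nat => Psi (i%:Z - m%:Z).
rewrite (eq_bigr (fun k : 'I_m => if (k < j)%N then f k.+1 - f k else 0)); last first.
  move=> k _ /=; rewrite /Zfun.
  case: ifP => ha.
    rewrite ifF ?mul0mx //; rewrite /j; lia.
  rewrite ifT; last by lia.
  rewrite ifT; last by rewrite /j; lia.
  rewrite mul1mx /f; congr (Psi _ - Psi _); lia.
rewrite -big_mkcond -(big_ord_widen _ (fun k => f k.+1 - f k) hj) /=.
rewrite -(big_mkord xpredT (fun k => f k.+1 - f k)) telescope_sumr // /f.
rewrite sub0r addrC subrK; congr (Psi _); rewrite /j; lia.
Qed.

End S.

Lemma uniq_sol (R : realType) (d m : nat) (A0 A1 : 'M[R]_d) (Psi X Y : int -> 'M[R]_d) :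
  solves_ivp m A0 A1 Psi X -> solves_ivp m A0 A1 Psi Y ->
  forall u : int, - (m%:Z) <= u -> Y u = X u.
Proof.
move=> [hX1 hX2] [hY1 hY2].
have key : forall n : nat, forall k : nat, (k <= n)%N -> Y (k%:Z - m%:Z) = X (k%:Z - m%:Z).
  elim=> [|n IH] k hk.
    by rewrite hX2 ?hY2 //; lia.
  case: (leqP k n) => hkn; first by apply: IH.
  have -> : k = n.+1 by lia.
  have [hn|hn] := boolP (n.+1%:Z - m%:Z <= 0).
    by rewrite hX2 ?hY2 //; lia.
  have e : n.+1%:Z - m%:Z = (n%:Z - m%:Z) + 1 by lia.
  have h0 : 0 <= n%:Z - m%:Z by lia.
  rewrite e; apply: (@subIr _ (X (n%:Z - m%:Z))).
  rewrite hX1 // -(IH n) // hY1 //.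
  have -> : n%:Z - m%:Z - m%:Z = (absz (n%:Z - m%:Z))%:Z - m%:Z by lia.
  by rewrite IH //; lia.
move=> u hu.
have -> : u = (absz (u + m%:Z))%:Z - m%:Z by lia.
by apply: key.
Qed.

Theorem theorem5 (R : realType) (d m : nat) (hd : (0 < d)%N) (hm : (0 < m)%N)
  (A0 A1 : 'M[R]_d) (Psi : int -> 'M[R]_d)
  (hcomm : forall u : int, - (m%:Z) <= u <= 0 -> A1 *m Psi u = Psi u *m A1) :
  solves_ivp m A0 A1 Psi (Xsol m A0 A1 Psi) /\
  (forall Y : int -> 'M[R]_d, solves_ivp m A0 A1 Psi Y ->
     forall u : int, - (m%:Z) <= u -> Y u = Xsol m A0 A1 Psi u).
Proof.
have hs : solves_ivp m A0 A1 Psi (Xsol m A0 A1 Psi).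
  split; [exact: Xsol_rec | exact: Xsol_init].
split=> //.
by move=> Y hY; apply: uniq_sol hs hY.
Qed.
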